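(* Let $M,N\ge1$, $\mathbf y\in\mathbb{R}^M$, $\mathbf H\in\mathbb{R}^{M\times N}$ with $R=\operatorname{rank}(\mathbf H)\ge1$, and $\sigma_e^2>0$, $\sigma_\epsilon^2>0$. Let $\mathbf H=\mathbf U\boldsymbol\Sigma\mathbf V^{\mathrm T}$ be a singular value decomposition ($\mathbf U,\mathbf V$ orthogonal) with nonzero singular values $\lambda_1\ge\cdots\ge\lambda_R>0$ in the first $R$ diagonal positions of $\boldsymbol\Sigma$, let $\boldsymbol\lambda=(\lambda_1,\dots,\lambda_R)^{\mathrm T}$ and $\widetilde{\mathbf y}=\mathbf U^{\mathrm T}\mathbf y$. Let $$f(\mathbf x)=\frac{\|\mathbf y-\mathbf H\mathbf x\|_2^2}{2(\sigma_e^2\|\mathbf x\|_2^2+\sigma_\epsilon^2)}+\frac M2\log(\sigma_e^2\|\mathbf x\|_2^2+\sigma_\epsilon^2),$$ and for $\nu>-\lambda_R^2/(2\sigma_e^2)$ let $$g(\nu)=\sum_{j=1}^{R}\frac{\widetilde y_j^2\,\nu\sigma_e^2}{\lambda_j^2+2\nu\sigma_e^2}+\frac12\|\widetilde{\mathbf y}_{R+1:M}\|_2^2-\frac M2\left(\sum_{j=1}^{R}\frac{\sigma_e^2\widetilde y_j^2\lambda_j^2}{(\lambda_j^2+2\nu\sigma_e^2)^2}+\sigma_\epsilon^2\right)+\nu\sigma_\epsilon^2 .$$ Then the following hold. (A) If $R\le N-1$ and $g(0)\ge0$, then every $\mathbf x=\mathbf V\widetilde{\mathbf x}$ with $\widetilde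 x_j=\widetilde y_j/\lambda_j$ for $j=1,\dots,R$ and $\sum_{i=R+1}^N\widetilde x_i^2=\frac{2g(0)}{M\sigma_e^2}$ is a global minimizer of $f$ on $\mathbb{R}^N$. (B) If $R\le N-1$ and $g(0)<0$, then there exists $\nu^\star\in(0,M/2]$ with $g(\nu^\star)=0$, and for any such $\nu^\star$ the vector $\mathbf x=\mathbf V\widetilde{\mathbf x}$ with $\widetilde x_j=\frac{\widetilde y_j\lambda_j}{\lambda_j^2+2\nu^\star\sigma_e^2}$ for $j=1,\dots,R$ and $\widetilde x_i=0$ for $i=R+1,\dots,N$ is a global minimizer of $f$. (C) If $R=N$, then for any $\nu^\star\in\left(-\frac{\lambda_R^2}{2\sigma_e^2},\frac M2\right]$ with $g(\nu^\star)=0$, the vector $\mathbf x=(\mathbf H^{\mathrm T}\mathbf H+2\nu^\star\sigma_e^2\mathbf I_N)^{-1}\mathbf H^{\mathrm T}\mathbf y$ is a global minimizer of $f$.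
   Context: $\widetilde{\mathbf y}_{R+1:M}=(\widetilde y_{R+1},\dots,\widetilde y_M)^{\mathrm T}$; if $R=M$ it is empty and its squared norm is $0$. The function $f$ is, up to additive constants, the negative log-likelihood of $\mathbf x$ in the model $\mathbf y=(\mathbf H+\mathbf E)\mathbf x+\boldsymbol\epsilon$ with $\mathbf E$ having i.i.d. $\mathcal N(0,\sigma_e^2)$ entries and $\boldsymbol\epsilon\sim\mathcal N(\mathbf 0,\sigma_\epsilon^2\mathbf I_M)$ independent; its global minimizers are the maximum likelihood estimates of $\mathbf x$. *)

(* Defs.v *)
From HB Require Import structures.
From mathcomp Require Import all_boot all_order all_algebra.
From mathcomp Require Import reals exp.
Set Implicit Arguments. Unset Strict Implicit. Unset Printing Implicit Defensive.
Import Order.TTheory GRing.Theory Num.Theory.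
Local Open Scope ring_scope.

(* entry k (0-based) of a column vector, 0 if out of range *)
Definition vat (R : realType) (n : nat) (v : 'cV[R]_n) (k : nat) : R :=
  match @insub nat (fun k => k < n)%N 'I_n k with
  | Some i => v i ord0 | None => 0 end.

Definition sqnorm (R : realType) (n : nat) (v : 'cV[R]_n) : R :=
  \sum_(i < n) v i ord0 ^+ 2.

Definition nll (R : realType) (M N : nat) (y : 'cV[R]_M) (H : 'M[R]_(M, N))
  (se2 sep2 : R) (x : 'cV[R]_N) : R :=
  sqnorm (y - H *m x) / (2 * (se2 * sqnorm x + sep2))
  + M%:R / 2 * ln (se2 * sqnorm x + sep2).

(* the function g; lam is 0-indexed: lam 0 >= ... >= lam (r-1) > 0,
   yt = U^T y, components 0..r-1 correspond to j = 1..R of the paper *)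
Definition gfun (R : realType) (M r : nat) (yt : 'cV[R]_M) (lam : nat -> R)
  (se2 sep2 nu : R) : R :=
  \sum_(j < M | (j < r)%N) (yt j ord0 ^+ 2 * nu * se2 / (lam j ^+ 2 + 2 * nu * se2))
  + 1 / 2 * (\sum_(j < M | (r <= j)%N) yt j ord0 ^+ 2)
  - M%:R / 2 * (\sum_(j < M | (j < r)%N)
                  (se2 * yt j ord0 ^+ 2 * lam j ^+ 2 / (lam j ^+ 2 + 2 * nu * se2) ^+ 2)
                + sep2)
  + nu * sep2.

Definition is_global_min (R : realType) (N : nat) (f : 'cV[R]_N -> R) (x : 'cV[R]_N) :=
  forall z : 'cV[R]_N, f x <= f z.

(* Main.v *)
Require Import Defs.
From HB Require Import structures.
From mathcomp Require Import all_boot all_order all_algebra.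
From mathcomp Require Import reals exp.
From mathcomp Require Import lra ring.
From mathcomp Require Import boolp classical_sets topology normedtype.
Import Order.TTheory GRing.Theory Num.Theory.
Import numFieldNormedType.Exports.
Local Open Scope classical_set_scope.
Local Open Scope ring_scope.

Lemma vatE (R : realType) n (v : 'cV[R]_n) (i : 'I_n) : vat v i = v i ord0.
Proof. by rewrite /vat (insubT (fun k => k < n)%N (ltn_ord i)) /=; congr (v _ _); apply: val_inj. Qed.

Lemma vat_ge (R : realType) n (v : 'cV[R]_n) k : (n <= k)%N -> vat v k = 0.
Proof. by move=> Hk; rewrite /vat insubF // ltnNge Hk. Qed.

Lemma sum_single (R:realType) n (v : 'cV[R]_n) (k:nat) :
  \sum_(j < n) (if (j:nat) == k then v j ord0 else 0) = vat v k.
Proof.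
case: (ltnP k n) => Hk.
  rewrite (bigD1 (Ordinal Hk)) //= eqxx big1 ?addr0 -?vatE //.
  by move=> j Hj; case: eqP => // Hjk; case/eqP: Hj; apply: val_inj.
rewrite vat_ge // big1 // => j _; case: eqP => // Hjk.
by move: (ltn_ord j); rewrite Hjk ltnNge Hk.
Qed.

Lemma sqnormE (R : realType) n (v : 'cV[R]_n) : sqnorm v = (v^T *m v) ord0 ord0.
Proof. by rewrite /sqnorm mxE; apply: eq_bigr => i _; rewrite !mxE expr2. Qed.

Lemma sqnorm_orth (R : realType) m n (A : 'M[R]_(m, n)) (v : 'cV[R]_n) :
  A^T *m A = 1%:M -> sqnorm (A *m v) = sqnorm v.
Proof. by move=> HA; rewrite !sqnormE trmx_mul mulmxA -(mulmxA _ _ A) HA mulmx1. Qed.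

Lemma Sig_mul (R : realType) M N r (Sigma : 'M[R]_(M, N)) (lam : nat -> R) (w : 'cV[R]_N) (i : 'I_M) :
  (forall (i : 'I_M) (j : 'I_N),
      Sigma i j = if ((i : nat) == j) && (i < r)%N then lam i else 0) ->
  (Sigma *m w) i ord0 = if (i < r)%N then lam (i : nat) * vat w i else 0.
Proof.
move=> HS; rewrite mxE; case: ifP => hi.
  rewrite -sum_single mulr_sumr; apply: eq_bigr => j _.
  by rewrite HS hi andbT eq_sym; case: eqP => _; rewrite ?mulr0 ?mul0r.
by apply: big1 => j _; rewrite HS hi andbF mul0r.
Qed.

Lemma SigT_mul (R : realType) M N r (Sigma : 'M[R]_(M, N)) (lam : nat -> R) (v : 'cV[R]_M) (j : 'I_N) :
  (forall (i : 'I_M) (j : 'I_N),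
      Sigma i j = if ((i : nat) == j) && (i < r)%N then lam i else 0) ->
  (Sigma^T *m v) j ord0 = if (j < r)%N then lam (j : nat) * vat v j else 0.
Proof.
move=> HS; rewrite mxE; case: ifP => hj.
  rewrite -sum_single mulr_sumr; apply: eq_bigr => i _.
  rewrite mxE HS; case: eqP => [->|_]; last by rewrite mul0r mulr0.
  by rewrite hj.
apply: big1 => i _; rewrite mxE HS; case: eqP => [->|_]; by rewrite ?hj ?mul0r.
Qed.

Lemma sum_conv (R : realType) M r (G : nat -> R) : (r <= M)%N ->
  \sum_(j < M | (j < r)%N) G j = \sum_(k < r) G k.
Proof. by move=> rM; rewrite (big_ord_widen M G). Qed.

Lemma log_core (R : realType) (m K ss s nu Qs Qz : R) :
  0 < m -> 0 < ss -> 0 < s ->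
  K - 2 * nu * s <= Qz -> Qs = K - 2 * nu * ss -> K = m * ss ->
  Qs / (2 * ss) + m / 2 * ln ss <= Qz / (2 * s) + m / 2 * ln s.
Proof.
move=> m0 ss0 s0 Hz Hs HK.
have h1 : (K - 2 * nu * s) / (2 * s) <= Qz / (2 * s).
  by rewrite ler_pM2r // invr_gt0 mulr_gt0.
apply: le_trans (lerD h1 (lexx _)).
have hl : ln ss - ln s <= ss / s - 1.
  rewrite -ln_div ?posrE //.
  have := @le_ln1Dx R (ss / s - 1).
  have -> : 1 + (ss / s - 1) = ss / s by ring.
  apply; rewrite ltrBrDl addrN divr_gt0 //.
rewrite Hs HK.
have e1 : (m * ss - 2 * nu * ss) / (2 * ss) = m / 2 - nu by field; rewrite gt_eqF.
have e2 : (m * ss - 2 * nu * s) / (2 * s) = m / 2 * (ss / s) - nu by field; rewrite gt_eqF.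
rewrite e1 e2.
have : m / 2 * (ln ss - ln s) <= m / 2 * (ss / s - 1) by rewrite ler_pM2l ?divr_gt0.
lra.
Qed.

Lemma cont_sum (R : realType) (I : Type) (s : seq I) (P : pred I) (F : I -> R -> R) (x : R) :
  (forall j, P j -> {for x, continuous (F j)}) ->
  {for x, continuous (fun nu => \sum_(j <- s | P j) F j nu)}.
Proof.
move=> HF; elim: s => [|a s IH].
  have -> : (fun nu => \sum_(j <- [::] | P j) F j nu) = fun _ => 0.
    by apply: funext => nu; rewrite big_nil.
  exact: cst_continuous.
have -> : (fun nu => \sum_(j <- a :: s | P j) F j nu) =
   (fun nu => (if P a then F a nu else 0) + \sum_(j <- s | P j) F j nu).
  by apply: funext => nu; rewrite big_cons; case: (P a); rewrite ?add0r.
apply: continuousD => //.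
case Pa: (P a); first exact: HF.
exact: cst_continuous.
Qed.

Lemma cont_lin (R : realType) (c b x : R) :
  {for x, continuous (fun nu : R => c + 2 * nu * b)}.
Proof.
apply: continuousD; first exact: cst_continuous.
apply: continuousM; last exact: cst_continuous.
apply: continuousM; first exact: cst_continuous.
exact: cvg_id.
Qed.

Lemma cont_F1 (R : realType) (a b c x : R) : 0 < c + 2 * x * b ->
  {for x, continuous (fun nu : R => a * nu * b / (c + 2 * nu * b))}.
Proof.
move=> Hx.
apply: continuousM; last apply: continuousV.
- apply: continuousM; last exact: cst_continuous.
  apply: continuousM; first exact: cst_continuous.
  exact: cvg_id.
- by rewrite gt_eqF.
- exact: cont_lin.
Qed.

Lemma cont_F2 (R : realType) (a b c x : R) : 0 < c + 2 * x * b ->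
  {for x, continuous (fun nu : R => a / (c + 2 * nu * b) ^+ 2)}.
Proof.
move=> Hx.
have -> : (fun nu : R => a / (c + 2 * nu * b) ^+ 2) =
   (fun nu => a * ((c + 2 * nu * b)^-1 * (c + 2 * nu * b)^-1)).
  by apply: funext => nu; rewrite expr2 invfM.
apply: continuousM; first exact: cst_continuous.
by apply: continuousM; apply: continuousV; rewrite ?gt_eqF //; apply: cont_lin.
Qed.

Lemma pos3 {R : realType} {a b : R} : 0 < a -> 0 < b -> 0 < 2 * a * b.
Proof. by move=> a0 b0; rewrite mulr_gt0 // mulr_gt0 // ltr0n. Qed.

Lemma nneg3 {R : realType} {a b : R} : 0 <= a -> 0 < b -> 0 <= 2 * a * b.
Proof. by move=> a0 b0; rewrite mulr_ge0 ?mulr_ge0 ?ler0n // ltW. Qed.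

Lemma cont_g (R : realType) M r (yt : 'cV[R]_M) (lam : nat -> R) (se2 sep2 x : R) :
  0 < se2 -> (forall j, (j < r)%N -> 0 < lam j) -> 0 <= x ->
  {for x, continuous (gfun r yt lam se2 sep2)}.
Proof.
move=> se0 lampos x0; rewrite /gfun.
apply: continuousD; last first.
  apply: continuousM; [exact: cvg_id | exact: cst_continuous].
apply: continuousB.
  apply: continuousD; last exact: cst_continuous.
  apply: cont_sum => j hj; apply: cont_F1.
  have l2 : 0 < lam j ^+ 2 by rewrite expr2 mulr_gt0 // lampos.
  by have := nneg3 x0 se0; lra.
apply: continuousM; first exact: cst_continuous.
apply: continuousD; last exact: cst_continuous.
apply: cont_sum => j hj; apply: cont_F2.
have l2 : 0 < lam j ^+ 2 by rewrite expr2 mulr_gt0 // lampos.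
by have := nneg3 x0 se0; lra.
Qed.

Lemma term_lb (R : realType) (a l b c : R) : 0 < l ^+ 2 + c ->
  a ^+ 2 * c / (l ^+ 2 + c) <= (a - l * b) ^+ 2 + c * b ^+ 2.
Proof.
move=> d0; rewrite -subr_ge0.
have -> : (a - l * b) ^+ 2 + c * b ^+ 2 - a ^+ 2 * c / (l ^+ 2 + c)
   = ((l ^+ 2 + c) * b - a * l) ^+ 2 / (l ^+ 2 + c) by field; rewrite gt_eqF.
by rewrite divr_ge0 // ?sqr_ge0 // ltW.
Qed.

Lemma term_eq (R : realType) (a l c : R) : 0 < l ^+ 2 + c ->
  (a - l * (a * l / (l ^+ 2 + c))) ^+ 2 + c * (a * l / (l ^+ 2 + c)) ^+ 2
  = a ^+ 2 * c / (l ^+ 2 + c).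
Proof. by move=> d0; field; rewrite gt_eqF. Qed.

Lemma sqnorm_ge0 (R : realType) n (v : 'cV[R]_n) : 0 <= sqnorm v.
Proof. by rewrite /sqnorm sumr_ge0 // => i _; rewrite sqr_ge0. Qed.
Theorem mainTheorem4 (R : realType) (M N r : nat)
  (y : 'cV[R]_M) (H : 'M[R]_(M, N)) (se2 sep2 : R)
  (U : 'M[R]_M) (V : 'M[R]_N) (Sigma : 'M[R]_(M, N)) (lam : nat -> R) :
  (1 <= M)%N -> (1 <= N)%N ->
  \rank H = r -> (1 <= r)%N ->
  0 < se2 -> 0 < sep2 ->
  U^T *m U = 1%:M -> V^T *m V = 1%:M ->
  (forall (i : 'I_M) (j : 'I_N),
      Sigma i j = if ((i : nat) == j) && (i < r)%N then lam i else 0) ->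
  (forall j k : nat, (j <= k)%N -> (k < r)%N -> lam k <= lam j) ->
  (forall j : nat, (j < r)%N -> 0 < lam j) ->
  H = U *m Sigma *m V^T ->
  let yt := U^T *m y in
  let f := nll y H se2 sep2 in
  let g := gfun r yt lam se2 sep2 in
  (* (A) *)
  ((r < N)%N -> 0 <= g 0 ->
    forall xt : 'cV[R]_N,
      (forall j : 'I_N, (j < r)%N -> xt j ord0 = vat yt j / lam j) ->
      \sum_(i < N | (r <= i)%N) xt i ord0 ^+ 2 = 2 * g 0 / (M%:R * se2) ->
      is_global_min f (V *m xt))
  /\
  (* (B) *)
  ((r < N)%N -> g 0 < 0 ->
    (exists nu, 0 < nu /\ nu <= M%:R / 2 /\ g nu = 0) /\
    (forall nu, 0 < nu -> nu <= M%:R / 2 -> g nu = 0 ->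
       is_global_min f
         (V *m \col_(i < N)
            (if (i < r)%N then vat yt i * lam i / (lam i ^+ 2 + 2 * nu * se2) else 0))))
  /\
  (* (C) *)
  (r = N ->
    forall nu, - (lam r.-1 ^+ 2) / (2 * se2) < nu -> nu <= M%:R / 2 -> g nu = 0 ->
      is_global_min f (invmx (H^T *m H + (2 * nu * se2)%:M) *m (H^T *m y))).
Proof.
move=> M1 N1 rk r1 se0 sep0 UU VV HS lammon lampos HH yt f g.
have rM : (r <= M)%N by rewrite -rk rank_leq_row.
have rN : (r <= N)%N by rewrite -rk rank_leq_col.
have UUt : U *m U^T = 1%:M by apply: mulmx1C.
have VVt : V *m V^T = 1%:M by apply: mulmx1C.
pose rho := \sum_(j < M | (r <= j)%N) yt j ord0 ^+ 2.
pose tail (w : 'cV[R]_N) := \sum_(i < N | (r <= i)%N) w i ord0 ^+ 2.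
pose Qf (w : 'cV[R]_N) := \sum_(k < r) (vat yt k - lam k * vat w k) ^+ 2 + rho.
pose sw (w : 'cV[R]_N) := se2 * sqnorm w + sep2.
have sqw : forall w : 'cV[R]_N, sqnorm w = \sum_(k < r) vat w k ^+ 2 + tail w.
  move=> w; rewrite /sqnorm (bigID (fun i : 'I_N => (i < r)%N)) /=; congr (_ + _).
    rewrite -(@sum_conv _ _ _ (fun k => vat w k ^+ 2) rN); apply: eq_bigr => i _; by rewrite vatE.
  by rewrite /tail; apply: eq_bigl => i; rewrite -leqNgt.
have Qw : forall w : 'cV[R]_N, sqnorm (y - H *m (V *m w)) = Qf w.
  move=> w.
  have -> : y - H *m (V *m w) = U *m (yt - Sigma *m w).
    by rewrite HH mulmxBr /yt !mulmxA UUt mul1mx -(mulmxA _ V^T) VV mulmx1.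
  rewrite sqnorm_orth // /sqnorm (bigID (fun i : 'I_M => (i < r)%N)) /=; congr (_ + _).
    rewrite -(@sum_conv _ _ _ (fun k => (vat yt k - lam k * vat w k) ^+ 2) rM); apply: eq_bigr => i hi.
    have -> : (yt - Sigma *m w) i ord0 = yt i ord0 - (Sigma *m w) i ord0 by rewrite !mxE.
    by rewrite (Sig_mul _ _ _ _ _ _ _ _ HS) hi vatE.
  apply: eq_big => i; first by rewrite -leqNgt.
  move=> hi; have -> : (yt - Sigma *m w) i ord0 = yt i ord0 - (Sigma *m w) i ord0 by rewrite !mxE.
  by rewrite (Sig_mul _ _ _ _ _ _ _ _ HS) ifN ?subr0 // -leqNgt.
have fV : forall w, f (V *m w) = Qf w / (2 * sw w) + M%:R / 2 * ln (sw w).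
  by move=> w; rewrite /f /nll Qw sqnorm_orth.
have surj : forall z : 'cV[R]_N, z = V *m (V^T *m z) by move=> z; rewrite mulmxA VVt mul1mx.
have gE : forall nu, g nu = \sum_(k < r) (vat yt k ^+ 2 * nu * se2 / (lam k ^+ 2 + 2 * nu * se2))
   + 1 / 2 * rho
   - M%:R / 2 * (\sum_(k < r) (se2 * vat yt k ^+ 2 * lam k ^+ 2 / (lam k ^+ 2 + 2 * nu * se2) ^+ 2) + sep2)
   + nu * sep2.
  move=> nu; rewrite /g /gfun.
  rewrite -(@sum_conv _ _ _ (fun k => vat yt k ^+ 2 * nu * se2 / (lam k ^+ 2 + 2 * nu * se2)) rM).
  rewrite -(@sum_conv _ _ _ (fun k => se2 * vat yt k ^+ 2 * lam k ^+ 2 / (lam k ^+ 2 + 2 * nu * se2) ^+ 2) rM).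
  by congr (_ + _ - _ * (_ + _) + _); apply: eq_bigr => i _; rewrite vatE.
have sw_pos : forall w, 0 < sw w.
  by move=> w; rewrite /sw ltr_pwDr // mulr_ge0 ?sqnorm_ge0 // ltW.
have key : forall (nu : R) (ws : 'cV[R]_N),
   (forall k, (k < r)%N -> 0 < lam k ^+ 2 + 2 * nu * se2) ->
   (forall w, 0 <= 2 * nu * se2 * tail w) ->
   (forall k, (k < r)%N -> vat ws k = vat yt k * lam k / (lam k ^+ 2 + 2 * nu * se2)) ->
   2 * nu * se2 * tail ws = 0 ->
   M%:R * se2 * tail ws = 2 * g nu ->
   is_global_min f (V *m ws).
  move=> nu ws dpos tpos wsE tail0 tailg z.
  rewrite (surj z) !fV.
  set c := 2 * nu * se2.
  set S1 := \sum_(k < r) vat yt k ^+ 2 * c / (lam k ^+ 2 + c).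
  have Sw : forall w : 'cV[R]_N, Qf w + c * sqnorm w
      = \sum_(k < r) ((vat yt k - lam k * vat w k) ^+ 2 + c * vat w k ^+ 2) + rho + c * tail w.
    by move=> w; rewrite /Qf sqw big_split /= mulrDr mulr_sumr; ring.
  have lb : forall w : 'cV[R]_N, S1 + rho <= Qf w + c * sqnorm w.
    move=> w; rewrite Sw -addrA lerD //; last by rewrite lerDl tpos.
    by apply: ler_sum => k _; apply: term_lb; apply: dpos.
  have eqs : Qf ws + c * sqnorm ws = S1 + rho.
    rewrite Sw tail0 addr0; congr (_ + _); apply: eq_bigr => k _.
    by rewrite wsE // term_eq // dpos.
  apply: (@log_core _ _ (S1 + rho + 2 * nu * sep2) _ _ nu).
  - by rewrite ltr0n.
  - exact: sw_pos.
  - exact: sw_pos.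
  - by move: (lb (V^T *m z)); rewrite /sw /c; lra.
  - by move: eqs; rewrite /sw /c; lra.
  - have e1 : se2 * \sum_(k < r) vat ws k ^+ 2 = \sum_(k < r) (se2 * vat yt k ^+ 2 * lam k ^+ 2 / (lam k ^+ 2 + 2 * nu * se2) ^+ 2).
      rewrite mulr_sumr; apply: eq_bigr => k _; rewrite wsE //.
      by field; rewrite gt_eqF // dpos.
    have e2 : S1 = 2 * \sum_(k < r) (vat yt k ^+ 2 * nu * se2 / (lam k ^+ 2 + 2 * nu * se2)).
      rewrite mulr_sumr; apply: eq_bigr => k _; rewrite /c.
      by field; rewrite gt_eqF // dpos.
    move: tailg; rewrite gE /sw sqw [se2 * (_ + _)]mulrDr e1 e2 => h.
    rewrite mulrDr mulrDr [M%:R * (se2 * _)]mulrA h; by field.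
have ws_vat : forall nu k, (k < r)%N ->
    vat (\col_(i < N) (if (i < r)%N then vat yt i * lam i / (lam i ^+ 2 + 2 * nu * se2) else 0) : 'cV[R]_N) k
    = vat yt k * lam k / (lam k ^+ 2 + 2 * nu * se2).
  move=> nu k hk; have hkN : (k < N)%N := leq_trans hk rN.
  by have := vatE _ _ (\col_(i < N) (if (i < r)%N then vat yt i * lam i / (lam i ^+ 2 + 2 * nu * se2) else 0) : 'cV[R]_N) (Ordinal hkN) => /= ->; rewrite mxE /= hk.
have ws_tail : forall nu,
    tail (\col_(i < N) (if (i < r)%N then vat yt i * lam i / (lam i ^+ 2 + 2 * nu * se2) else 0)) = 0.
  move=> nu; rewrite /tail big1 // => i hi; rewrite mxE ifN ?expr0n //.
  by rewrite -leqNgt.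
have tail_ge0 : forall w, 0 <= tail w by move=> w; rewrite /tail sumr_ge0 // => i _; rewrite sqr_ge0.
split.
  move=> rN1 g0 xt xtE xtail.
  apply: (key 0).
  - by move=> k hk; rewrite !(mulr0, mul0r) addr0 exprn_gt0 // lampos.
  - by move=> w; rewrite !(mulr0, mul0r).
  - move=> k hk; have hkN : (k < N)%N := leq_trans hk rN.
    have := vatE _ _ xt (Ordinal hkN) => /= ->; rewrite xtE //=.
    have := lampos k hk => lk0.
    by field; rewrite ?gt_eqF // ?addr0 ?exprn_gt0 // mulr0 mul0r addr0 exprn_gt0.
  - by rewrite !(mulr0, mul0r).
  - have hM : 0 < M%:R * se2 :> R by rewrite mulr_gt0 // ltr0n.
    by rewrite /tail xtail; field; rewrite gt_eqF // pnatr_eq0 -lt0n.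
split.
  move=> rN1 g0; split.
    have gM : 0 <= g (M%:R / 2).
      rewrite gE.
      set m := M%:R / 2.
      have -> : \sum_(k < r) vat yt k ^+ 2 * m * se2 / (lam k ^+ 2 + 2 * m * se2) + 1 / 2 * rho -
         m * (\sum_(k < r) se2 * vat yt k ^+ 2 * lam k ^+ 2 / (lam k ^+ 2 + 2 * m * se2) ^+ 2 + sep2) + m * sep2
         = \sum_(k < r) (vat yt k ^+ 2 * m * se2 / (lam k ^+ 2 + 2 * m * se2)
               - m * (se2 * vat yt k ^+ 2 * lam k ^+ 2 / (lam k ^+ 2 + 2 * m * se2) ^+ 2)) + 1 / 2 * rho.
        rewrite sumrB -mulr_sumr; ring.
      have m0 : 0 < m by rewrite divr_gt0 // ltr0n.
      apply: addr_ge0; last by apply: mulr_ge0; [rewrite divr_ge0 | rewrite /rho sumr_ge0 // => i _; rewrite sqr_ge0].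
      apply: sumr_ge0 => k _.
      have d0 : 0 < lam k ^+ 2 + 2 * m * se2.
        have := sqr_ge0 (lam k); have := pos3 m0 se0. lra.
      have -> : vat yt k ^+ 2 * m * se2 / (lam k ^+ 2 + 2 * m * se2) -
          m * (se2 * vat yt k ^+ 2 * lam k ^+ 2 / (lam k ^+ 2 + 2 * m * se2) ^+ 2)
          = vat yt k ^+ 2 * m * se2 * (2 * m * se2) / (lam k ^+ 2 + 2 * m * se2) ^+ 2.
        by field; rewrite gt_eqF.
      apply: divr_ge0; last exact: exprn_ge0 (ltW d0).
      apply: mulr_ge0; last exact: ltW (pos3 m0 se0).
      by apply: mulr_ge0; [apply: mulr_ge0; [exact: sqr_ge0 | exact: ltW] | exact: ltW].
    have M2 : 0 <= M%:R / 2 :> R by rewrite divr_ge0 // ler0n.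
    have [c cI gc] : exists2 c, c \in `[0, M%:R / 2] & g c = 0.
      apply: IVT => //.
        apply: continuous_in_subspaceT => x; rewrite inE /= in_itv /= => /andP [x0 _].
        exact: cont_g.
      rewrite ge_min ltW //= le_max gM orbT //.
    exists c; move: cI; rewrite in_itv /= => /andP [c0 cM].
    split; last by split.
    rewrite lt_neqAle c0 andbT; apply/eqP => hc.
    by move: gc; rewrite -hc => gc'; move: g0; rewrite gc' ltxx.
  move=> nu nu0 nuM gnu; apply: (key nu).
  - move=> k hk; have l2 : 0 < lam k ^+ 2 by rewrite expr2 mulr_gt0 // lampos.
    by have := pos3 nu0 se0; lra.
  - by move=> w; rewrite mulr_ge0 // nneg3 // ltW.
  - by move=> k hk; rewrite ws_vat.
  - by rewrite ws_tail mulr0.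
  - by rewrite ws_tail gnu !mulr0.
move=> rNe nu nulo nuM gnu.
set ws := \col_(i < N) (if (i < r)%N then vat yt i * lam i / (lam i ^+ 2 + 2 * nu * se2) else 0).
have dpos : forall k, (k < r)%N -> 0 < lam k ^+ 2 + 2 * nu * se2.
  move=> k hk.
  have hr : (r.-1 < r)%N by rewrite prednK.
  have hkr : (k <= r.-1)%N by rewrite -ltnS prednK.
  have lk := lammon _ _ hkr hr.
  have l0 := lampos _ hr.
  have h1 : - lam r.-1 ^+ 2 < nu * (2 * se2).
    by rewrite -ltr_pdivrMr ?mulr_gt0 ?ltr0n.
  have h2 : lam r.-1 ^+ 2 <= lam k ^+ 2.
    by rewrite ler_pXn2r // ?nnegrE ltW // (lt_le_trans l0 lk).
  lra.
have Tmul : forall u : 'cV[R]_N, forall j : 'I_N,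
    ((Sigma^T *m Sigma + (2 * nu * se2)%:M) *m u) j ord0 = (lam j ^+ 2 + 2 * nu * se2) * u j ord0.
  move=> u j; have hj : (j < r)%N by rewrite rNe.
  have hjM : (j < M)%N := leq_trans hj rM.
  rewrite mulmxDl mul_scalar_mx -mulmxA.
  have -> : ((Sigma^T *m (Sigma *m u)) + (2 * nu * se2) *: u) j ord0
     = (Sigma^T *m (Sigma *m u)) j ord0 + (2 * nu * se2) * u j ord0 by rewrite !mxE.
  rewrite (SigT_mul _ _ _ _ _ _ _ _ HS) hj.
  have := vatE _ _ (Sigma *m u) (Ordinal hjM) => /= ->.
  rewrite (Sig_mul _ _ _ _ _ _ _ _ HS) /= hj vatE; ring.
have HA : H^T *m H + (2 * nu * se2)%:M = V *m (Sigma^T *m Sigma + (2 * nu * se2)%:M) *m V^T.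
  rewrite HH !trmx_mul trmxK mulmxDr mulmxDl mul_mx_scalar -scalemxAl VVt scalemx1.
  congr (_ + _); rewrite !mulmxA -(mulmxA _ U^T U) UU mulmx1 //.
have Hb : H^T *m y = V *m (Sigma^T *m yt).
  by rewrite HH !trmx_mul trmxK /yt !mulmxA.
have Tws : (Sigma^T *m Sigma + (2 * nu * se2)%:M) *m ws = Sigma^T *m yt.
  apply/matrixP => i j; rewrite (ord1 j) Tmul (SigT_mul _ _ _ _ _ _ _ _ HS).
  have hi : (i < r)%N by rewrite rNe.
  rewrite hi mxE hi; have := dpos i hi => di.
  by field; rewrite gt_eqF.
have Tunit : (Sigma^T *m Sigma + (2 * nu * se2)%:M) \in unitmx.
  rewrite -unitmx_tr unitmxE unitfE; apply/negP => /det0P [v vn0 vT].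
  move/eqP: vn0; apply; apply/matrixP => i j; rewrite (ord1 i) !mxE.
  have : (((Sigma^T *m Sigma + (2 * nu * se2)%:M) *m v^T) j ord0 = 0).
    by rewrite -[_ *m v^T]trmxK trmx_mul trmxK vT !mxE.
  rewrite Tmul mxE => /eqP; rewrite mulf_eq0 => /orP [|/eqP //].
  have hj : (j < r)%N by rewrite rNe.
  by rewrite gt_eqF // dpos.
have [VTu Vu] := mulmx1_unit VV.
have Aunit : H^T *m H + (2 * nu * se2)%:M \in unitmx.
  by rewrite HA !unitmx_mul Vu Tunit VTu.
have -> : H^T *m y = (H^T *m H + (2 * nu * se2)%:M) *m (V *m ws).
  by rewrite HA Hb -!mulmxA (mulmxA V^T) VV mul1mx Tws.
rewrite mulKmx //.
apply: (key nu) => //.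
- move=> w; have -> : tail w = 0.
    by rewrite /tail big_pred0 // => i; rewrite rNe leqNgt ltn_ord.
  by rewrite mulr0.
- by move=> k hk; rewrite ws_vat.
- by rewrite ws_tail mulr0.
- by rewrite ws_tail gnu !mulr0.
Qed.
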